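(* Let $n>0$ be a fixed integer. Then for any integer $b>0$ there exist infinitely many integers $a>0$ such that the lattice $\mathbb{L}_{ab}$ contains no nonzero isotropic vector and $\mu(\mathbb{L}_{ab})<-n$, i.e. $\mathbb{L}_{ab}$ does not represent any of $0,-1,-2,\dots,-n$ by a nonzero vector.
   Context: For an integer $c>0$, $\mathbb{L}_c$ denotes the lattice $\mathbb{Z}^2$ with quadratic form $q(x,y)=x^2-cy^2$. A lattice represents $n$ if some nonzero vector $v$ has $q(v)=n$. For a lattice $\mathbb{L}$, $\mu(\mathbb{L})$ is the largest negative integer of the form $q(v)$, $v\in\mathbb{L}$. *)

(* Defs.v *)
From Stdlib Require Import ZArith.
Open Scope Z_scope.

(* The lattice L_c = Z^2 with quadratic form q(x,y) = x^2 - c y^2. *)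
Definition qL (c : Z) (v : Z * Z) : Z := (fst v)^2 - c * (snd v)^2.

Definition represents (c m : Z) : Prop :=
  exists v : Z * Z, v <> (0, 0) /\ qL c v = m.

Definition has_isotropic (c : Z) : Prop := represents c 0.

(* mu(L_c) < -n, expressed as: L_c represents none of -1, ..., -n
   (mu is the largest negative value of q; mu < -n iff no value in [-n,-1]). *)
Definition mu_lt (c n : Z) : Prop :=
  forall k : Z, 1 <= k <= n -> ~ represents c (- k).

(* Main.v *)
Require Import Defs.
From Stdlib Require Import ZArith Lia Zwf.
Open Scope Z_scope.

Lemma sq_lt_abs (u v : Z) : 0 <= u -> 0 <= v -> u^2 < v^2 -> u < v.
Proof. intros. destruct (Z_lt_le_dec u v); [lia|]. nia. Qed.

Lemma descent (m k : Z) : 2 <= m -> 0 <= k < 2*m - 2 ->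
  forall y, 0 <= y -> forall x, x^2 - (m^2-1)*y^2 = -k -> y = 0.
Proof.
  intros Hm Hk y Hy.
  induction y as [y IH] using (well_founded_induction (Zwf_well_founded 0)).
  intros x Hx.
  destruct (Z.eq_dec y 0) as [|Hy0]; [assumption|exfalso].
  set (X := Z.abs x).
  assert (HX : X^2 - (m^2-1)*y^2 = -k) by (unfold X; rewrite <- Hx; rewrite Z.pow_2_r, Z.pow_2_r; rewrite <- Z.abs_mul; rewrite Z.abs_eq; nia).
  assert (HX0 : 0 <= X) by (unfold X; lia).
  assert (H1 : X < m*y).
  { apply sq_lt_abs; try nia. }
  assert (H2 : (m-1)*y < X).
  { apply sq_lt_abs; try nia. }
  assert (Hy' : m*y - X = 0).
  { apply (IH (m*y - X)) with (x := m*X - (m^2-1)*y). unfold Zwf; lia. lia.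
    rewrite <- HX. ring. }
  lia.
Qed.

Theorem proposition2p3 (n : Z) (hn : 0 < n) :
  forall b : Z, 0 < b ->
  forall N : Z, exists a : Z, N < a /\ 0 < a /\
    ~ has_isotropic (a * b) /\ mu_lt (a * b) n.
Proof.
  intros b Hb N.
  set (t := Z.abs N + n + 2).
  assert (Ht : Z.abs N + n + 2 <= t) by (unfold t; lia).
  exists (t*(b*t+2)).
  set (m := b*t+1).
  assert (Hm : n + 3 <= m) by (unfold m; nia).
  assert (Hc : t*(b*t+2)*b = m^2-1) by (unfold m; ring).
  assert (key : forall k x y, 0 <= k <= n -> qL (t*(b*t+2)*b) (x,y) = -k -> y = 0).
  { intros k x y Hk Hq. unfold qL in Hq; simpl in Hq. rewrite Hc in Hq.
    destruct (Z_le_dec 0 y).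
    - eapply (descent m k); eauto; lia.
    - assert (-y = 0) by (eapply (descent m k) with (x := x); try lia;
        rewrite <- Hq; ring).
      lia. }
  split; [nia|]. split; [nia|]. split.
  - intros [[x y] [Hne Hq]].
    assert (y = 0) by (apply (key 0 x y); [lia| rewrite Hq; ring]).
    subst y. unfold qL in Hq; simpl in Hq.
    apply Hne. f_equal. nia.
  - intros k Hk [[x y] [Hne Hq]].
    assert (y = 0) by (apply (key k x y); [lia| exact Hq]).
    subst y. unfold qL in Hq; simpl in Hq. nia.
Qed.
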